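(* Let $k\geqslant 1$ and let $\pi_1, \ldots, \pi_k \geqslant 3$ be pairwise relatively prime integers, with $\pi_1=3$. Then the NFA $A_{\pi_1, \ldots, \pi_k}$ and the regular expression $\alpha_{\pi_1, \ldots, \pi_k}$ define the same language.
   Context: Over the alphabet $\{a,b\}$, for an integer $\pi\geqslant 3$ let $\beta_\pi=(a((b\mid\epsilon)a)^{\pi-2}a)^*$, where $(b\mid\epsilon)$ denotes the language $\{b,\epsilon\}$ and $x^{m}$ denotes $m$-fold concatenation; and let $\alpha_{\pi_1,\ldots,\pi_k}=\big(a(\beta_{\pi_1}\mid\cdots\mid\beta_{\pi_k})b\big)^*$. The NFA $A_{\pi_1,\ldots,\pi_k}=(\{a,b\},Q,\{\widehat q\},\delta,\{\widehat q\})$ has states $Q=\{\widehat{q}\} \cup \bigcup_{i=1}^k \{q_{i,0}, \ldots, q_{i,\pi_i-1}\} \cup \bigcup_{i=1}^k \{r_{i,1}, \ldots, r_{i,\pi_i-2}\}$, unique initial state $\widehat q$, unique accepting state $\widehat q$, and exactly the following transitions: $\delta(\widehat{q}, a) = \{q_{1,0}, \ldots, q_{k,0}\}$; $\delta(q_{i,j},a) = \{q_{i,(j+1) \bmod \pi_i}\}$ for all $i$ and $0\leqslant j\leqslant \pi_i-1$; $\delta(q_{i,j},b) = \{r_{i,j}\}$ and $\delta(r_{i,j},a)=\{q_{i,j+1}\}$ for $1 \leqslant j \leqslant \pi_i-2$; $\delta(q_{i,0},b) = \{\widehat{q}\}$; all other transitions are empty. *)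

(* Defs.v *)
From mathcomp Require Import all_boot.
Set Implicit Arguments. Unset Strict Implicit. Unset Printing Implicit Defensive.

Inductive letter := la | lb.
Definition word := seq letter.

Inductive regex :=
  | REps
  | RSym of letter
  | RAlt of regex & regex
  | RCat of regex & regex
  | RStar of regex.

Inductive lang : regex -> word -> Prop :=
  | L_eps : lang REps [::]
  | L_sym c : lang (RSym c) [:: c]
  | L_altl r s w : lang r w -> lang (RAlt r s) w
  | L_altr r s w : lang s w -> lang (RAlt r s) w
  | L_cat r s u v : lang r u -> lang s v -> lang (RCat r s) (u ++ v)
  | L_star0 r : lang (RStar r) [::]
  | L_starS r u v : lang r u -> lang (RStar r) v -> lang (RStar r) (u ++ v).

Fixpoint rpow (r : regex) (m : nat) : regex :=
  if m is m'.+1 then RCat r (rpow r m') else REps.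

Fixpoint ralts (r : regex) (rs : seq regex) : regex :=
  if rs is r' :: rs' then RAlt r (ralts r' rs') else r.

Definition beta (p : nat) : regex :=
  RStar (RCat (RSym la)
     (RCat (rpow (RCat (RAlt (RSym lb) REps) (RSym la)) (p - 2)) (RSym la))).

(* alpha_{pi_1..pi_k} = ( a (beta_pi1 | ... | beta_pik) b )^*,
   for the list pis = [:: pi_1; ...; pi_k] (k >= 1) *)
Definition alpha (pis : seq nat) : regex :=
  RStar (RCat (RSym la)
     (RCat (ralts (beta (head 0 pis)) (map beta (behead pis))) (RSym lb))).

Record nfa := NFA {
  nstate : Type;
  ndelta : nstate -> letter -> nstate -> Prop;   (* q' \in delta(q, c) *)
  ninit : nstate -> Prop;
  nfinal : nstate -> Prop }.

Inductive run (S : Type) (d : S -> letter -> S -> Prop) : S -> word -> S -> Prop :=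
  | run_nil p : run d p [::] p
  | run_cons p c q w r : d p c q -> run d q w r -> run d p (c :: w) r.

Definition nfa_lang (A : nfa) (w : word) : Prop :=
  exists p q, @ninit A p /\ @nfinal A q /\ run (@ndelta A) p w q.

(* States of A_{pi_1..pi_k}; the paper's q_{i,j}, r_{i,j} with i in 1..k are
   encoded as AQ (i-1) j and AR (i-1) j (0-based component index). *)
Inductive astate := AHat | AQ of nat & nat | AR of nat & nat.

Definition pi_ (pis : seq nat) (i : nat) : nat := nth 0 pis i.

Inductive adelta (pis : seq nat) : astate -> letter -> astate -> Prop :=
  | ad_hat i : i < size pis -> adelta pis AHat la (AQ i 0)
  | ad_cyc i j : i < size pis -> j < pi_ pis i ->
      adelta pis (AQ i j) la (AQ i (j.+1 %% pi_ pis i))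
  | ad_qr i j : i < size pis -> 1 <= j <= pi_ pis i - 2 ->
      adelta pis (AQ i j) lb (AR i j)
  | ad_rq i j : i < size pis -> 1 <= j <= pi_ pis i - 2 ->
      adelta pis (AR i j) la (AQ i j.+1)
  | ad_back i : i < size pis -> adelta pis (AQ i 0) lb AHat.

Definition A_nfa (pis : seq nat) : nfa :=
  @NFA astate (adelta pis) (fun p => p = AHat) (fun p => p = AHat).

(* Main.v *)
Require Import Defs.
From mathcomp Require Import all_boot.
From mathcomp Require Import zify.
From Stdlib Require Import Lia.

Lemma cat_inv r s w : lang (RCat r s) w -> exists u v, w = u ++ v /\ lang r u /\ lang s v.
Proof. move=> H; inversion H; subst; eauto. Qed.
Lemma sym_inv c w : lang (RSym c) w -> w = [:: c].
Proof. move=> H; inversion H; subst; eauto. Qed.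
Lemma eps_inv w : lang REps w -> w = [::].
Proof. move=> H; inversion H; subst; eauto. Qed.
Lemma alt_inv r s w : lang (RAlt r s) w -> lang r w \/ lang s w.
Proof. move=> H; inversion H; subst; eauto. Qed.

Lemma lang_ralts r rs w :
  lang (ralts r rs) w <-> exists i, i <= size rs /\ lang (nth REps (r :: rs) i) w.
Proof.
elim: rs r => [|r' rs IH] r /=.
  split; first by move=> H; exists 0.
  by case=> [[|i]] [] //.
split.
  move/alt_inv => [H|H]; first by exists 0.
  have [i [Hi H']] := (IH r').1 H. by exists i.+1.
case=> [[|i]] [Hi H] /=; first by apply: L_altl.
apply: L_altr; apply/(IH r'); by exists i.
Qed.

Lemma lang_alts pis w : 0 < size pis ->
  lang (ralts (beta (head 0 pis)) (map beta (behead pis))) w <->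
  exists i, i < size pis /\ lang (beta (pi_ pis i)) w.
Proof.
case: pis => [|p0 ps] //= _.
rewrite lang_ralts size_map.
have E : forall i, i < (size ps).+1 ->
   nth REps (beta p0 :: map beta ps) i = beta (pi_ (p0 :: ps) i).
  move=> i Hi. rewrite /pi_. by rewrite -(@nth_map _ 0 _ REps beta i (p0 :: ps)).
split; case=> i [Hi H]; exists i; split => //; by rewrite ?E // -?E.
Qed.

Section A.
Variable pis : seq nat.
Hypothesis Hsz : 0 < size pis.
Hypothesis H3 : forall i, i < size pis -> 3 <= nth 0 pis i.

Definition X := RCat (RAlt (RSym lb) REps) (RSym la).

Lemma run_cat S (d : S -> letter -> S -> Prop) p u q v r :
  run d p u q -> run d q v r -> run d p (u ++ v) r.
Proof. elim=> //= p0 c q0 w r0 Hd _ IH Hv. apply: run_cons Hd (IH Hv). Qed.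

Lemma star_run S (d : S -> letter -> S -> Prop) s r w :
  (forall u, lang r u -> run d s u s) -> lang (RStar r) w -> run d s w s.
Proof.
move=> Hr H. remember (RStar r) as rr eqn:E.
induction H; try discriminate.
- exact: run_nil.
- case: E => E; subst r0. apply: run_cat (Hr _ H) (IHlang2 erefl).
Qed.

Lemma rpow_run i m : i < size pis -> forall v j, lang (rpow X m) v -> 1 <= j ->
  j + m <= pi_ pis i - 1 -> run (adelta pis) (AQ i j) v (AQ i (j + m)).
Proof.
move=> Hi; have Hp := H3 _ Hi; rewrite /pi_.
elim: m => [|m IH] v j /=.
  by move=> /eps_inv -> _ _; rewrite addn0; apply: run_nil.
move=> /cat_inv [v1 [v2 [-> [H1 H2]]]] Hj Hjm.
have -> : j + m.+1 = j.+1 + m by lia.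
apply: run_cat (IH v2 j.+1 H2 ltac:(lia) ltac:(lia)).
move: H1 => /cat_inv [b1 [a1 [-> [/alt_inv [/sym_inv ->|/eps_inv ->] /sym_inv ->]]]] /=.
  apply: run_cons; first by apply: ad_qr => //; rewrite /pi_; lia.
  apply: run_cons; first by apply: ad_rq => //; rewrite /pi_; lia.
  exact: run_nil.
apply: run_cons; first by apply: (@ad_cyc _ i j) => //; rewrite /pi_; lia.
rewrite /pi_ modn_small; last by lia.
exact: run_nil.
Qed.

Lemma beta_run i w : i < size pis -> lang (beta (pi_ pis i)) w ->
  run (adelta pis) (AQ i 0) w (AQ i 0).
Proof.
move=> Hi; have Hp := H3 _ Hi. apply: star_run => u.
move=> /cat_inv [u1 [u2 [-> [/sym_inv -> /cat_inv [v [v2 [-> [Hv /sym_inv ->]]]]]]]] /=.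
apply: run_cons; first by apply: (@ad_cyc _ i 0) => //; rewrite /pi_; lia.
rewrite modn_small; last by rewrite /pi_; lia.
have Hr := @rpow_run i _ Hi _ 1 Hv (isT : 0 < 1) ltac:(rewrite /pi_; lia).
apply: run_cat Hr _.
apply: run_cons; last exact: run_nil.
have E : (1 + (pi_ pis i - 2)).+1 %% pi_ pis i = 0.
  have -> : (1 + (pi_ pis i - 2)).+1 = pi_ pis i by rewrite /pi_; lia.
  by rewrite modnn.
have Hd : adelta pis (AQ i (1 + (pi_ pis i - 2))) la (AQ i ((1 + (pi_ pis i - 2)).+1 %% pi_ pis i)).
  apply: ad_cyc => //; rewrite /pi_; lia.
by rewrite E in Hd.
Qed.

Lemma alpha_run w : lang (alpha pis) w -> run (adelta pis) AHat w AHat.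
Proof.
apply: star_run => u.
move=> /cat_inv [u1 [u2 [-> [/sym_inv -> /cat_inv [v [v2 [-> [Hv /sym_inv ->]]]]]]]] /=.
have [i [Hi Hb]] := (@lang_alts pis v Hsz).1 Hv.
apply: (run_cons (ad_hat Hi)).
apply: run_cat (@beta_run i v Hi Hb) _.
apply: run_cons; first exact: ad_back.
exact: run_nil.
Qed.

Definition Qpart p j u := if j is 0 then lang (beta p) u else
  exists z y, u = z ++ la :: y /\ lang (rpow X (p - 1 - j)) z /\ lang (beta p) y.

Definition Tq i j w := i < size pis /\ exists u v, w = u ++ lb :: v /\
  lang (alpha pis) v /\ Qpart (pi_ pis i) j u.

Definition T s w := match s with
  | AHat => lang (alpha pis) w
  | AQ i j => Tq i j w
  | AR i j => exists w', w = la :: w' /\ Tq i j.+1 w' end.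

Lemma step s c s' w : adelta pis s c s' -> T s' w -> T s (c :: w).
Proof.
case=> {s c s'}.
- move=> i Hi /= [_ [u [v [-> [Hv Hu]]]]].
  have -> : la :: (u ++ lb :: v) = ([:: la] ++ (u ++ [:: lb])) ++ v by rewrite /= -catA.
  apply: L_starS Hv. apply: L_cat; first exact: L_sym.
  apply: L_cat; last exact: L_sym.
  apply/lang_alts => //. by exists i.
- move=> i j Hi Hj /= [_ [u [v [-> [Hv Hu]]]]].
  have Hp := H3 _ Hi. split => //. exists (la :: u), v; split => //; split => //.
  move: Hu. rewrite /pi_ in Hj *.
  case: (ltngtP j.+1 (nth 0 pis i)) => Hjp; last first.
  + rewrite Hjp modnn /= => Hb. case: j Hj Hjp => [|j] Hj Hjp; first lia.
    exists [::], u; split => //; split => //.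
    have -> : nth 0 pis i - 1 - j.+1 = 0 by lia. exact: L_eps.
  + lia.
  rewrite modn_small //.
  case: j Hj Hjp => [|j] Hj Hjp /=.
    move=> [z [y [-> [Hz Hy]]]].
    have -> : la :: (z ++ la :: y) = ([:: la] ++ (z ++ [:: la])) ++ y by rewrite /= -catA.
    apply: L_starS Hy. apply: L_cat; first exact: L_sym.
    apply: L_cat; last exact: L_sym.
    by have <- : nth 0 pis i - 1 - 1 = nth 0 pis i - 2 by lia.
  move=> [z [y [-> [Hz Hy]]]].
  exists (la :: z), y; split => //; split => //.
  have -> : nth 0 pis i - 1 - j.+1 = (nth 0 pis i - 1 - j.+2).+1 by lia.
  rewrite /=. have -> : la :: z = [:: la] ++ z by [].
  apply: L_cat => //.
  have -> : [:: la] = [::] ++ [:: la] by [].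
  apply: L_cat; [apply: L_altr; exact: L_eps | exact: L_sym].
- move=> i j Hi Hj /= [w' [-> [_ [u [v [-> [Hv Hu]]]]]]].
  split => //. exists (lb :: la :: u), v; split => //; split => //.
  move: Hu. rewrite /pi_ in Hj *.
  case: j Hj => [|j] Hj; first lia.
  rewrite /= => -[z [y [-> [Hz Hy]]]].
  exists (lb :: la :: z), y; split => //; split => //.
  have -> : nth 0 pis i - 1 - j.+1 = (nth 0 pis i - 1 - j.+2).+1 by lia.
  rewrite /=. have -> : lb :: la :: z = [:: lb; la] ++ z by [].
  apply: L_cat => //.
  have -> : [:: lb; la] = [:: lb] ++ [:: la] by [].
  apply: L_cat; [apply: L_altl; exact: L_sym | exact: L_sym].
- move=> i j Hi Hj /= H. by exists w.
- move=> i Hi /= Hw. split => //. exists [::], w; split => //; split => //.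
  exact: L_star0.
Qed.

Lemma run_T s w s' : run (adelta pis) s w s' -> s' = AHat -> T s w.
Proof.
elim=> [p ->|p c q w0 r Hd _ IH E]; first exact: L_star0.
exact: step Hd (IH E).
Qed.

End A.

Theorem lemma5 (pis : seq nat) :
  0 < size pis ->
  (forall i, i < size pis -> 3 <= nth 0 pis i) ->
  (forall i j, i < size pis -> j < size pis -> i != j ->
     coprime (nth 0 pis i) (nth 0 pis j)) ->
  nth 0 pis 0 = 3 ->
  forall w : word, nfa_lang (A_nfa pis) w <-> lang (alpha pis) w.
Proof.
move=> Hsz H3 _ _ w; split.
  move=> [p [q [/= Hp [Hq Hr]]]]; subst.
  exact: (@run_T pis Hsz H3 _ _ _ Hr erefl).
move=> H; exists AHat, AHat; split => //; split => //.
exact: alpha_run.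
Qed.
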